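(* Let $A$ be a central simple algebra of degree $n$ over a field $k$, and let $I\subset A$ be a left ideal of $k$-dimension $n$. Fix an integer $j$. Then the map $J\mapsto J^\circ I$ is a canonical bijection from the set of left ideals $J$ of $A$ with $I\subset J$ and $\dim_k J=nj$ onto the set of $k$-subspaces $W\subset I^\circ I$ with $\dim_k W=n-j$. (Its inverse is $W\mapsto{}^\circ(WA)$.)
   Context: For $I\subset A$: right annihilator $I^\circ=\{a\in A: Ia=0\}$, left annihilator ${}^\circ I=\{a\in A: aI=0\}$. Products of subspaces $UW$ denote the $k$-span of products $uw$. *)

(* Defs.v *)
From HB Require Import structures.
From mathcomp Require Import all_boot all_order all_algebra.
From mathcomp Require Import falgebra.
Set Implicit Arguments. Unset Strict Implicit. Unset Printing Implicit Defensive.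
Import GRing.Theory.
Local Open Scope ring_scope.
Local Open Scope vspace_scope.

Section Defs.
Variables (k : fieldType) (A : falgType k).

(* right annihilator I° = {a | I a = 0} : intersection over a basis of I
   of the kernels of v |-> b * v *)
Definition rann (I : {vspace A}) : {vspace A} :=
  (\bigcap_i lker (amull (tnth (vbasis I) i)))%VS.

(* left annihilator °I = {a | a I = 0} *)
Definition lann (I : {vspace A}) : {vspace A} :=
  (\bigcap_i lker (amulr (tnth (vbasis I) i)))%VS.

Definition left_ideal (J : {vspace A}) : bool := (fullv * J <= J)%VS.

Definition two_sided_ideal (J : {vspace A}) : bool :=
  (fullv * J <= J)%VS && (J * fullv <= J)%VS.

Definition central_simple_of_degree (n : nat) : Prop :=
  [/\ ('Z(fullv : {vspace A}) = 1)%VS,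
      (forall J : {vspace A}, two_sided_ideal J -> J = 0%VS \/ J = fullv)
    & \dim (fullv : {vspace A}) = (n ^ 2)%N].

End Defs.

(* Main.v *)
Require Import Defs.
From HB Require Import structures.
From mathcomp Require Import all_boot all_order all_algebra.
From mathcomp Require Import falgebra.
From mathcomp Require Import zify.
From Stdlib Require Import Classical.
Import GRing.Theory.
Local Open Scope ring_scope.

Section Aux.
Variables (k : fieldType) (A : falgType k).
Implicit Types (X Y W J : {vspace A}) (x y : A).

Lemma lannP X x : reflect (forall y, y \in X -> x * y = 0) (x \in lann X).
Proof.
apply: (iffP subv_bigcapP) => [H y /coord_vbasis-> | H i _].
  rewrite mulr_sumr big1 // => i _; rewrite -scalerAr.
  have := H i isT; rewrite -memvE memv_ker lfunE /= -tnth_nth => /eqP->.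
  by rewrite scaler0.
by rewrite -memvE memv_ker lfunE /= H // vbasis_mem // mem_tnth.
Qed.

Lemma rannP X x : reflect (forall y, y \in X -> y * x = 0) (x \in rann X).
Proof.
apply: (iffP subv_bigcapP) => [H y /coord_vbasis-> | H i _].
  rewrite mulr_suml big1 // => i _; rewrite -scalerAl.
  have := H i isT; rewrite -memvE memv_ker lfunE /= -tnth_nth => /eqP->.
  by rewrite scaler0.
by rewrite -memvE memv_ker lfunE /= H // vbasis_mem // mem_tnth.
Qed.

Lemma left_idealP J : reflect (forall a x, x \in J -> a * x \in J) (left_ideal J).
Proof.
apply: (iffP prodvP) => [H a x Hx | H a x _ Hx]; last exact: H.
exact: H (memvf a) Hx.
Qed.

Lemma lann_left X : left_ideal (lann X).
Proof.
apply/left_idealP => a x /lannP H; apply/lannP => y Hy.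
by rewrite -mulrA H ?mulr0.
Qed.

Lemma lann_mulfull X : lann (X * fullv)%VS = lann X.
Proof.
apply/vspaceP => x; apply/lannP/lannP => H y Hy.
  by apply: H; rewrite -[y]mulr1 memv_mul ?memvf.
have : (X * fullv <= lker (amull x))%VS.
  by apply/prodvP => u v Hu _; rewrite memv_ker lfunE /= mulrA H ?mul0r.
by move/subvP/(_ y Hy); rewrite memv_ker lfunE /= => /eqP.
Qed.

Lemma lannD X Y : lann (X + Y)%VS = (lann X :&: lann Y)%VS.
Proof.
apply/vspaceP => x; rewrite memv_cap; apply/lannP/andP => [H|[/lannP H1 /lannP H2] z].
  split; apply/lannP => y Hy; apply: H.
    by rewrite -[y]addr0 memv_add ?mem0v.
  by rewrite -[y]add0r memv_add ?mem0v.
by case/memv_addP => u Hu [v Hv ->]; rewrite mulrDr H1 ?H2 ?addr0.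
Qed.

Lemma lann0 : lann (0%VS : {vspace A}) = fullv.
Proof. by apply/vspaceP => x; rewrite memvf; apply/lannP => y; rewrite memv0 => /eqP->; rewrite mulr0. Qed.

Lemma lann_line x : lann <[x]>%VS = lker (amulr x).
Proof.
apply/vspaceP => a; rewrite memv_ker lfunE /=; apply/lannP/eqP => [H|H y /vlineP[c ->]].
  by apply: H; rewrite memv_line.
by rewrite -scalerAr H scaler0.
Qed.

End Aux.

Section Main.
Variables (k : fieldType) (A : falgType k) (n : nat) (I : {vspace A}).
Hypothesis simple : forall J : {vspace A}, two_sided_ideal J -> J = 0%VS \/ J = fullv.
Hypothesis dimA : \dim (fullv : {vspace A}) = (n ^ 2)%N.
Hypothesis Ileft : left_ideal I.
Hypothesis dimI : \dim I = n.

Lemma n_gt0 : (0 < n)%N.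
Proof. by have := FalgType_proper A; rewrite -dimvf dimA; case: n. Qed.

Lemma I_mul a x : x \in I -> (a * x)%R \in I.
Proof. by move=> Hx; move/left_idealP: Ileft; apply. Qed.

Lemma lannI0 : lann I = 0%VS.
Proof.
have two : two_sided_ideal (lann I).
  apply/andP; split; first exact: lann_left.
  apply/prodvP => u v /lannP Hu _; apply/lannP => y Hy.
  by rewrite -mulrA Hu // I_mul.
case: (simple _ two) => // H.
have I0 : I = 0%VS.
  apply/eqP; rewrite -subv0; apply/subvP => y Hy; rewrite memv0.
  have : (1 \in lann I) by rewrite H memvf.
  by move/lannP/(_ y Hy); rewrite mul1r => ->.
by move: dimI n_gt0; rewrite I0 dimv0 => <-.
Qed.

Lemma lann_lb (s : seq A) : all (fun x => x \in I) s ->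
  (n ^ 2 <= \dim (lann <<s>>%VS) + n * size s)%N.
Proof.
elim: s => [|x s IH] /=.
  by rewrite span_nil lann0 dimA muln0 addn0.
case/andP => Hx Hs; have {}IH := IH Hs.
rewrite span_cons lannD.
have h1 := dimv_sum_cap (lann <[x]>) (lann <<s>>).
have h2 : (\dim (lann <[x]> + lann <<s>>)%VS <= n ^ 2)%N by rewrite -dimA dimvS // subvf.
have h3 := limg_ker_dim (amulr x) fullv.
rewrite capfv -lann_line dimA in h3.
have h4 : (\dim (amulr x @: fullv)%VS <= n)%N.
  rewrite -dimI dimvS //.
  by apply/subvP => _ /memv_imgP[u _ ->]; rewrite lfunE /= I_mul.
rewrite mulnS; lia.
Qed.

Lemma lann_dim {W} : (W <= I)%VS -> (\dim (lann W) + n * \dim W = n ^ 2)%N.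
Proof.
move=> WI.
have lb X : (X <= I)%VS -> (n ^ 2 <= \dim (lann X) + n * \dim X)%N.
  move=> XI; have := lann_lb (vbasis X).
  rewrite (span_basis (vbasisP X)) size_tuple; apply.
  by apply/allP => x /vbasis_mem; apply: (subvP XI).
set W' := (I :\: W)%VS.
have W'I : (W' <= I)%VS by apply: diffvSl.
have h1 := lb _ WI; have h2 := lb _ W'I.
have IW : (W' + W)%VS = I by have := addv_diff_cap I W; rewrite (capv_idPr WI).
have cap0 : (lann W :&: lann W')%VS = 0%VS by rewrite -lannD addvC IW lannI0.
have h3 := dimv_sum_cap (lann W) (lann W').
rewrite cap0 dimv0 in h3.
have h4 : (\dim (lann W + lann W')%VS <= n ^ 2)%N by rewrite -dimA dimvS // subvf.
have h5 := dimv_cap_compl I W; rewrite (capv_idPr WI) dimI -/W' in h5.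
have h6 : (n * \dim W + n * \dim W' = n ^ 2)%N by rewrite -mulnDr h5 mulnn.
lia.
Qed.

Lemma img_amulr {x} : x \in I -> x != 0 -> (amulr x @: fullv)%VS = I.
Proof.
move=> Hx x0.
have sub : (amulr x @: fullv <= I)%VS.
  by apply/subvP => _ /memv_imgP[u _ ->]; rewrite lfunE /= I_mul.
apply/eqP; rewrite eqEdim sub /=.
have h := limg_ker_dim (amulr x) fullv; rewrite capfv -lann_line dimA in h.
have xI : (<[x]> <= I)%VS by rewrite -memvE.
have h2 := lann_dim xI; rewrite dim_vline x0 in h2.
rewrite dimI; lia.
Qed.

Lemma exists_pre {x y} : x \in I -> x != 0 -> y \in I -> exists a, (a * x)%R = y.
Proof.
move=> Hx x0; rewrite -(img_amulr Hx x0) => /memv_imgP[a _ ->].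
by exists a; rewrite lfunE.
Qed.

Lemma Sch {x y} : x \in I -> y \in I -> (x * y)%R \in <[x]>%VS.
Proof.
move=> Hx Hy; have [->|x0] := eqVneq x 0; first by rewrite mul0r mem0v.
set W' := (I :\: <[x]>)%VS.
have xI : (<[x]> <= I)%VS by rewrite -memvE.
have IW : (<[x]> + W')%VS = I by have := addv_diff_cap I <[x]>; rewrite (capv_idPr xI) addvC.
have dW := dimv_cap_compl I <[x]>; rewrite (capv_idPr xI) dim_vline x0 dimI -/W' in dW.
have dl := lann_dim (diffvSl I <[x]>); rewrite -/W' in dl.
have nn : (n * n.-1 + n = n ^ 2)%N by rewrite -mulnSr prednK ?n_gt0 // mulnn.
have cap0 : (lann W' :&: lker (amulr x))%VS = 0%VS by rewrite -lann_line -lannD addvC IW lannI0.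
have h := limg_ker_dim (amulr x) (lann W'); rewrite cap0 dimv0 add0n in h.
have sub : (amulr x @: lann W' <= I)%VS.
  by apply/subvP => _ /memv_imgP[u _ ->]; rewrite lfunE /= I_mul.
have E : (amulr x @: lann W')%VS = I.
  apply/eqP; rewrite eqEdim sub /= dimI h.
  have : (\dim W' = n.-1)%N by lia.
  move=> dW'; rewrite dW' in dl; lia.
have : x \in (amulr x @: lann W')%VS by rewrite E.
case/memv_imgP => p /lannP Hp px; rewrite lfunE /= in px.
have : (x * y)%R \in I by apply: I_mul.
rewrite -IW => /memv_addP[u Hu [w Hw Exy]].
have Epu : (p * (x * y))%R = u.
  rewrite Exy mulrDr (Hp w Hw) addr0.
  by case/vlineP: Hu => c ->; rewrite -scalerAr -px.
have -> : (x * y)%R = u by rewrite -Epu mulrA -px.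
by [].
Qed.


Lemma exists_e : exists2 e, e \in I & forall x, x \in I -> (x * e)%R = x.
Proof.
set x0 := vpick I.
have Ix0 : x0 \in I := memv_pick I.
have nz : x0 != 0.
  by rewrite /x0 vpick0 -dimv_eq0 dimI -lt0n n_gt0.
have [y Iy xy0] : exists2 y, y \in I & (x0 * y)%R != 0.
  apply: NNPP => H; apply: (negP nz).
  have : x0 \in lann I.
    apply/lannP => y Hy; apply: NNPP => H2; apply: H; exists y => //.
    by apply/eqP.
  by rewrite lannI0 memv0.
have /vlineP[c Ec] := Sch Ix0 Iy.
have c0 : c != 0 by apply: contraNneq xy0 => c0; rewrite Ec c0 scale0r.
exists (c^-1 *: y); first by rewrite memvZ.
move=> x Ix; have [a <-] := exists_pre Ix0 nz Ix.
by rewrite -mulrA -scalerAr Ec scalerA mulVf // scale1r.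
Qed.

Lemma rann_mulI J : (rann J * I)%VS = (rann J :&: I)%VS.
Proof.
have [e Ie He] := exists_e.
apply/eqP; rewrite eqEsubv; apply/andP; split.
  apply/prodvP => r i /rannP Hr Hi; rewrite memv_cap I_mul // andbT.
  by apply/rannP => y Hy; rewrite mulrA Hr ?mul0r.
apply/subvP => x; rewrite memv_cap => /andP[Hx Ix].
by rewrite -(He x Ix) memv_mul.
Qed.

Definition kerI b := (lker (amull b) :&: I)%VS.

Lemma kerI_step {J b} : left_ideal J -> b \in J -> kerI b <> (rann J :&: I)%VS ->
  exists2 b2, b2 \in J & (\dim (kerI b2) < \dim (kerI b))%N.
Proof.
move=> JL Jb Hneq.
have UK : (rann J :&: I <= kerI b)%VS.
  apply/subvP => x; rewrite !memv_cap => /andP[/rannP H ->]; rewrite andbT.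
  by rewrite memv_ker lfunE /= H.
have [x Kx nU] : exists2 x, x \in kerI b & x \notin (rann J :&: I)%VS.
  apply: NNPP => H; apply: Hneq; apply/eqP; rewrite eqEsubv UK andbT.
  apply/subvP => x Kx; apply: NNPP => H2; apply: H; exists x => //.
  by apply/negP.
have /andP[bx Ix] : (b * x == 0)%R && (x \in I).
  by move: Kx; rewrite memv_cap memv_ker lfunE.
move/eqP: bx => bx.
have [b' Jb' b'x] : exists2 b', b' \in J & (b' * x)%R != 0.
  apply: NNPP => H; apply: (negP nU); rewrite memv_cap Ix andbT.
  apply/rannP => y Jy; apply: NNPP => H2; apply: H; exists y => //.
  by apply/eqP.
set w := (b' * x)%R.
have Iw : w \in I by apply: I_mul.
set Y := (amull b @: I)%VS.
have dimY : (\dim Y < n)%N.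
  have h := limg_ker_dim (amull b) I.
  rewrite capvC -/(kerI b) dimI -/Y in h.
  have : (0 < \dim (kerI b))%N.
    rewrite lt0n dimv_eq0; apply/eqP => K0; rewrite K0 memv0 in Kx.
    by move: b'x; rewrite /w (eqP Kx) mulr0 eqxx.
  lia.
have [z Iz zY] : exists2 z, z \in I & z \notin Y.
  apply: NNPP => H.
  have : (I <= Y)%VS.
    apply/subvP => z Iz; apply: NNPP => H2; apply: H; exists z => //.
    by apply/negP.
  move/dimvS; rewrite dimI; lia.
have [e Ie He] := exists_e.
have [d dw] := exists_pre Iw b'x Ie.
have z0 : z != 0 by apply: contraNneq zY => ->; rewrite mem0v.
exists (b + z * d * b')%R.
  by rewrite memvD //; move/left_idealP: JL; apply.
have sub : (kerI (b + z * d * b')%R <= kerI b)%VS.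
  apply/subvP => v; rewrite !memv_cap !memv_ker !lfunE /= => /andP[/eqP H Iv].
  rewrite Iv andbT.
  have /vlineP[c Ec] : (z * (d * (b' * v)))%R \in <[z]>%VS.
    by apply: Sch => //; rewrite !I_mul.
  move: H; rewrite mulrDl -!mulrA Ec => /eqP; rewrite addr_eq0 => /eqP Ebv.
  have [c0|c0] := eqVneq c 0; first by rewrite Ebv c0 scale0r oppr0.
  exfalso; apply: (negP zY).
  have : (b * v)%R \in Y by have := memv_img (amull b) Iv; rewrite lfunE.
  rewrite Ebv memvN => /(memvZ (c^-1)); by rewrite scalerA mulVf // scale1r.
have notin : x \notin kerI (b + z * d * b').
  rewrite memv_cap memv_ker lfunE /= Ix andbT mulrDl bx add0r -!mulrA.
  by rewrite -/w dw He.
rewrite ltnNge; apply/negP => Hle.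
have : kerI (b + z * d * b') == kerI b by rewrite eqEdim sub Hle.
by move/eqP => E; rewrite E Kx in notin.
Qed.

Lemma kerI_exists {J} : left_ideal J -> exists2 b, b \in J & kerI b = (rann J :&: I)%VS.
Proof.
move=> JL.
suff H : forall m b, b \in J -> (\dim (kerI b) <= m)%N ->
    exists2 b0, b0 \in J & kerI b0 = (rann J :&: I)%VS.
  exact: (H _ 0 (mem0v J) (leqnn _)).
elim=> [|m IH] b Jb hm.
  case: (classic (kerI b = (rann J :&: I)%VS)) => [E|NE]; first by exists b.
  by have [b2 _ lt] := kerI_step JL Jb NE; move: lt hm; lia.
case: (classic (kerI b = (rann J :&: I)%VS)) => [E|NE]; first by exists b.
have [b2 Jb2 lt] := kerI_step JL Jb NE.
by apply: (IH b2 Jb2); rewrite -ltnS (leq_trans lt hm).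
Qed.

Lemma left_ideal_struct {J} : left_ideal J ->
  J = lann (rann J :&: I)%VS /\ (\dim J + n * \dim (rann J :&: I)%VS = n ^ 2)%N.
Proof.
move=> JL; have [b Jb Kb] := kerI_exists JL.
set U := (rann J :&: I)%VS in Kb *.
set Y := (amull b @: I)%VS.
have YI : (Y <= I)%VS.
  by apply/subvP => _ /memv_imgP[u Iu ->]; rewrite lfunE /= I_mul.
have UI : (U <= I)%VS by apply: capvSr.
have hY := limg_ker_dim (amull b) I.
rewrite capvC -/(kerI b) Kb dimI -/Y in hY.
have kerb : lker (amulr b) = lann Y.
  apply/vspaceP => c; rewrite memv_ker lfunE /=.
  apply/eqP/lannP => [cb0 y /memv_imgP[i Ii ->]|H].
    by rewrite lfunE /= mulrA cb0 mul0r.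
  apply/eqP; rewrite -memv0 -lannI0; apply/lannP => i Ii.
  rewrite -mulrA; apply: H.
  by have := memv_img (amull b) Ii; rewrite lfunE.
have hZ := limg_ker_dim (amulr b) fullv.
rewrite capfv kerb dimA in hZ.
have hlY := lann_dim YI.
have hlU := lann_dim UI.
have ZJ : (amulr b @: fullv <= J)%VS.
  apply/subvP => _ /memv_imgP[u _ ->]; rewrite lfunE /=.
  by move/left_idealP: JL; apply.
have JU : (J <= lann U)%VS.
  apply/subvP => a Ja; apply/lannP => u; rewrite memv_cap => /andP[/rannP Hu _].
  exact: Hu.
have e1 : (n * n = n * \dim U + n * \dim Y)%N by rewrite -mulnDr hY.
rewrite -mulnn in hZ hlY hlU.
have dZ := dimvS ZJ.
have EJ : J = lann U.
  apply/eqP; rewrite eqEdim JU /=; lia.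
split => //; rewrite {1}EJ; lia.
Qed.


Lemma main_result (j : int) :
  let dom := fun J : {vspace A} =>
    [/\ left_ideal J, (I <= J)%VS & (\dim J)%:Z = n%:Z * j] in
  let cod := fun W : {vspace A} =>
    (W <= rann I * I)%VS /\ (\dim W)%:Z = n%:Z - j in
  let f := fun J : {vspace A} => (rann J * I)%VS in
  let g := fun W : {vspace A} => lann (W * fullv)%VS in
  [/\ (forall J, dom J -> cod (f J)),
      (forall W, cod W -> dom (g W)),
      (forall J, dom J -> g (f J) = J)
    & (forall W, cod W -> f (g W) = W)].
Proof.
move=> dom cod f g.
have n0 := n_gt0.
split.
- move=> J [JL IJ dJ]; have [EJ hJ] := left_ideal_struct JL.
  rewrite /cod /f !rann_mulI; split.
    apply: capvS => //; apply/subvP => x /rannP H; apply/rannP => y Iy.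
    by apply: H; apply: (subvP IJ).
  have dU : (\dim (rann J :&: I)%VS <= n)%N by rewrite -dimI dimvS // capvSr.
  have h : (n%:Z * ((\dim (rann J :&: I)%VS)%:Z - (n%:Z - j)) = 0)%R.
    rewrite mulrBr mulrBr -dJ.
    have -> : (n%:Z * n%:Z = (\dim J)%:Z + n%:Z * (\dim (rann J :&: I)%VS)%:Z)%R.
      by rewrite -PoszM -PoszM -PoszD hJ mulnn.
    lia.
  move/eqP: h; rewrite mulf_eq0 => /orP[|]; first by move/eqP => h; lia.
  by rewrite subr_eq0 => /eqP.
- move=> W [WS dW].
  have WI : (W <= I)%VS by move: WS; rewrite rann_mulI => /subv_trans; apply; apply: capvSr.
  rewrite /dom /g lann_mulfull; split.
  + exact: lann_left.
  + apply/subvP => i Ii; apply/lannP => w Ww.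
    have := subvP WS w Ww; rewrite rann_mulI memv_cap => /andP[/rannP H _].
    exact: H.
  + have h := lann_dim WI.
    have -> : j = (n%:Z - (\dim W)%:Z)%R by rewrite dW opprB addrC subrK.
    rewrite mulrBr; move: h; rewrite -mulnn; lia.
- move=> J [JL _ _]; rewrite /g /f lann_mulfull rann_mulI.
  by case: (left_ideal_struct JL) => <-.
- move=> W [WS dW].
  have WI : (W <= I)%VS by move: WS; rewrite rann_mulI => /subv_trans; apply; apply: capvSr.
  rewrite /f /g lann_mulfull rann_mulI.
  have [_ h1] := left_ideal_struct (@lann_left _ _ W).
  have h2 := lann_dim WI.
  have WU : (W <= rann (lann W) :&: I)%VS.
    apply/subvP => w Ww; rewrite memv_cap (subvP WI) // andbT.
    by apply/rannP => y /lannP; apply.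
  have : (n * \dim (rann (lann W) :&: I)%VS = n * \dim W)%N by lia.
  move/eqP; rewrite eqn_pmul2l // => /eqP dE.
  by apply/eqP; rewrite eq_sym eqEdim WU dE /=.
Qed.

End Main.

Theorem proposition4p14 (k : fieldType) (A : falgType k) (n : nat)
  (I : {vspace A}) (j : int) :
  central_simple_of_degree A n ->
  left_ideal I -> \dim I = n ->
  let dom := fun J : {vspace A} =>
    [/\ left_ideal J, (I <= J)%VS & (\dim J)%:Z = n%:Z * j] in
  let cod := fun W : {vspace A} =>
    (W <= rann I * I)%VS /\ (\dim W)%:Z = n%:Z - j in
  let f := fun J : {vspace A} => (rann J * I)%VS in
  let g := fun W : {vspace A} => lann (W * fullv)%VS in
  [/\ (forall J, dom J -> cod (f J)),
      (forall W, cod W -> dom (g W)),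
      (forall J, dom J -> g (f J) = J)
    & (forall W, cod W -> f (g W) = W)].
Proof.
move=> [_ s d] Il dI.
exact (@main_result k A n I s d Il dI j).
Qed.
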